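(* Let $T$ be a locally finite tree, $G\leq\mathrm{Aut}(T)$ a closed subgroup, $g\in G$ hyperbolic and $x\in\partial T$ the attracting fixed point of $g$. The following are equivalent: (i) $G_x$ is open in $G$; (ii) there is a compact open subgroup $K\leq G$ with $g^nKg^{-n}\supseteq K$ for all $n\in\mathbb{N}$; (iii) there is a compact open subgroup $K\leq G$ such that $[K:K\cap g^nKg^{-n}]$, $n\in\mathbb{N}$, is bounded; (iv) for all compact open subgroups $K\leq G$ the sequence $[K:K\cap g^nKg^{-n}]$, $n\in\mathbb{N}$, is bounded.
   Context: $\mathrm{Aut}(T)$ has the topology of pointwise convergence. A hyperbolic automorphism fixes no vertex or edge; it fixes exactly two boundary points and translates along the geodesic axis between them; the attracting fixed point is the one toward which it translates. *)

(* Defs.v *)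
From Stdlib Require Import List Arith.
Import ListNotations.

Set Implicit Arguments.
Section Defs.
Variable V : Type.
Variable adj : V -> V -> Prop.

Definition is_walk (c : nat -> V) (n : nat) : Prop :=
  forall i, i < n -> adj (c i) (c (S i)).

Definition is_cycle (c : nat -> V) (n : nat) : Prop :=
  3 <= n /\ is_walk c n /\ c n = c 0 /\
  (forall i j, i < n -> j < n -> i <> j -> c i <> c j).

Definition is_tree : Prop :=
  (forall u v, adj u v -> adj v u) /\
  (forall u, ~ adj u u) /\
  (forall u v, exists (c : nat -> V) (n : nat), c 0 = u /\ c n = v /\ is_walk c n) /\
  (forall c n, ~ is_cycle c n).

Definition locally_finite : Prop :=
  forall v, exists l : list V, forall w, adj v w -> In w l.

Definition is_aut (f : V -> V) : Prop :=
  (forall u v, f u = f v -> u = v) /\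
  (forall v, exists u, f u = v) /\
  (forall u v, adj u v <-> adj (f u) (f v)).

Definition agree_on (F : list V) (f h : V -> V) : Prop :=
  forall v, In v F -> h v = f v.

Definition subset (A B : (V -> V) -> Prop) : Prop := forall f, A f -> B f.

(** Open sets of Aut(T) for the topology of pointwise convergence
    (V discrete): basic neighbourhoods fix finitely many vertices. *)
Definition aut_open (U : (V -> V) -> Prop) : Prop :=
  forall f, is_aut f -> U f ->
    exists F : list V, forall h, is_aut h -> agree_on F f h -> U h.

Definition open_in (G U : (V -> V) -> Prop) : Prop :=
  subset U G /\
  forall f, U f -> exists F : list V, forall h, G h -> agree_on F f h -> U h.

Definition aut_compact (K : (V -> V) -> Prop) : Prop :=
  subset K is_aut /\
  forall (I : Type) (U : I -> (V -> V) -> Prop),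
    (forall i, aut_open (U i)) ->
    (forall k, K k -> exists i, U i k) ->
    exists l : list I, forall k, K k -> exists i, In i l /\ U i k.

Definition is_aut_subgroup (G : (V -> V) -> Prop) : Prop :=
  subset G is_aut /\
  G (fun v => v) /\
  (forall f h, G f -> G h -> G (fun v => f (h v))) /\
  (forall f, G f -> exists h, G h /\ (forall v, f (h v) = v) /\ (forall v, h (f v) = v)).

Definition closed_subgroup (G : (V -> V) -> Prop) : Prop :=
  is_aut_subgroup G /\
  forall f, is_aut f ->
    (forall F : list V, exists h, G h /\ agree_on F f h) -> G f.

Definition subgroup_of (G K : (V -> V) -> Prop) : Prop :=
  is_aut_subgroup K /\ subset K G.

Definition compact_open_subgroup (G K : (V -> V) -> Prop) : Prop :=
  subgroup_of G K /\ open_in G K /\ aut_compact K.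

Definition hyperbolic (g : V -> V) : Prop :=
  is_aut g /\
  (forall v, g v <> v) /\
  (forall u v, adj u v -> ~ (g u = v /\ g v = u)).

(** Boundary: geodesic rays up to eventual coincidence. *)
Definition is_ray (r : nat -> V) : Prop :=
  forall n, adj (r n) (r (S n)) /\ r n <> r (S (S n)).

Definition ray_equiv (r1 r2 : nat -> V) : Prop :=
  exists k m, forall n, r1 (n + k) = r2 (n + m).

(** [r] represents the attracting fixed point of g: r lies on the axis of g
    and g translates along r towards its end. *)
Definition attracting_ray (g : V -> V) (r : nat -> V) : Prop :=
  is_ray r /\ exists l, 0 < l /\ forall n, g (r n) = r (n + l).

Definition stabilizer (G : (V -> V) -> Prop) (r : nat -> V) : (V -> V) -> Prop :=
  fun h => G h /\ ray_equiv (fun n => h (r n)) r.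

(** g^n K g^-n = { h | exists k in K, h o g^n = g^n o k }. *)
Definition conj_set (g : V -> V) (n : nat) (K : (V -> V) -> Prop) : (V -> V) -> Prop :=
  fun h => exists k, K k /\ forall v, h (Nat.iter n g v) = Nat.iter n g (k v).

Definition inter (A B : (V -> V) -> Prop) : (V -> V) -> Prop :=
  fun f => A f /\ B f.

(** [K : H] <= B : K is covered by at most B left cosets a H with a in K. *)
Definition index_le (K H : (V -> V) -> Prop) (B : nat) : Prop :=
  exists s : list (V -> V), length s <= B /\ (forall a, In a s -> K a) /\
    forall k, K k -> exists a h, In a s /\ H h /\ forall v, k v = a (h v).

Definition index_seq_bounded (g : V -> V) (K : (V -> V) -> Prop) : Prop :=
  exists B, forall n, index_le K (inter K (conj_set g n K)) B.

End Defs.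

(* Main.v *)
Require Import Defs.
From Stdlib Require Import List Arith Lia Classical ClassicalEpsilon.
Import ListNotations.

Section Tree.
Variable V : Type.
Variable adj : V -> V -> Prop.
Hypothesis Htree : is_tree adj.

Definition NB (c : nat -> V) (n : nat) := forall i, i + 2 <= n -> c i <> c (i + 2).

Lemma adj_sym : forall u v, adj u v -> adj v u.
Proof. destruct Htree as [H _]; exact H. Qed.
Lemma adj_irr : forall u, ~ adj u u.
Proof. destruct Htree as [_ [H _]]; exact H. Qed.
Lemma acyc : forall c n, ~ is_cycle adj c n.
Proof. destruct Htree as [_ [_ [_ H]]]; exact H. Qed.

Lemma closed_nb : forall c n, is_walk adj c n -> NB c n -> 1 <= n -> c 0 = c n -> False.
Proof.
  intros c n Hw Hnb H1 Hc.
  assert (aux : forall d i, 1 <= d -> i + d <= n -> c i = c (i + d) -> False).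
  { intro d. induction d as [d IH] using (well_founded_induction lt_wf).
    intros i Hd Hid Hci.
    destruct (classic (exists a b, a < b /\ b < d /\ c (i + a) = c (i + b))) as [[a [b [Hab [Hbd He]]]]|Hno].
    - apply (IH (b - a) ltac:(lia) (i + a)); [lia|lia|].
      replace (i + a + (b - a)) with (i + b) by lia. exact He.
    - destruct (Nat.eq_dec d 1) as [->|Hd1].
      { apply (adj_irr (c i)). pose proof (Hw i ltac:(lia)) as Ha.
        replace (S i) with (i + 1) in Ha by lia. rewrite <- Hci in Ha. exact Ha. }
      destruct (Nat.eq_dec d 2) as [->|Hd2].
      { apply (Hnb i ltac:(lia)). exact Hci. }
      apply (acyc (fun k => c (i + k)) d).
      split; [lia|]. split; [|split].
      + intros k Hk. replace (i + S k) with (S (i + k)) by lia. apply Hw. lia.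
      + simpl. rewrite Nat.add_0_r. symmetry. exact Hci.
      + intros a b Ha Hb Hab He. apply Hno.
        destruct (Nat.lt_total a b) as [Hlt|[Hlt|Hlt]].
        * exists a, b. auto.
        * lia.
        * exists b, a. auto. }
  apply (aux n 0); auto; lia.
Qed.

Lemma walk_le : forall c n m, is_walk adj c n -> m <= n -> is_walk adj c m.
Proof. intros c n m H Hm i Hi. apply H. lia. Qed.
Lemma nb_le : forall c n m, NB c n -> m <= n -> NB c m.
Proof. intros c n m H Hm i Hi. apply H. lia. Qed.

Lemma uniq_nb : forall a b p q, is_walk adj p a -> NB p a -> is_walk adj q b -> NB q b ->
  p 0 = q 0 -> p a = q b -> a = b /\ forall i, i <= a -> p i = q i.
Proof.
  induction a as [|a IH]; intros b p q Hpw Hpn Hqw Hqn H0 Hab.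
  - destruct b as [|b].
    + split; auto. intros i Hi. replace i with 0 by lia. auto.
    + exfalso. apply (closed_nb q (S b)); auto; try lia. rewrite <- H0. auto.
  - destruct b as [|b].
    + exfalso. apply (closed_nb p (S a)); auto; try lia. rewrite H0. auto.
    + destruct (classic (p a = q b)) as [He|Hne].
      * destruct (IH b p q) as [Hab' Hi]; auto.
        { eapply walk_le; eauto. } { eapply nb_le; eauto. }
        { eapply walk_le; eauto. } { eapply nb_le; eauto. }
        split; [lia|]. intros i Hle. destruct (Nat.eq_dec i (S a)) as [->|Hn].
        -- subst. auto.
        -- apply Hi. lia.
      * exfalso.
        set (c := fun i => if le_lt_dec i (S a) then p i else q (S a + S b - i)).
        apply (closed_nb c (S a + S b)).
        -- intros i Hi. unfold c.
           destruct (le_lt_dec i (S a)); destruct (le_lt_dec (S i) (S a)).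
           ++ apply Hpw. lia.
           ++ assert (i = S a) by lia. subst i.
              replace (S a + S b - S (S a)) with b by lia. rewrite Hab.
              apply adj_sym. apply Hqw. lia.
           ++ lia.
           ++ replace (S a + S b - i) with (S (S a + S b - S i)) by lia.
              apply adj_sym. apply Hqw. lia.
        -- intros i Hi. unfold c.
           destruct (le_lt_dec i (S a)); destruct (le_lt_dec (i + 2) (S a)).
           ++ apply Hpn. lia.
           ++ destruct (Nat.eq_dec i a) as [->|Hia].
              ** replace (S a + S b - (a + 2)) with b by lia. intro E.
                 apply Hne. exact E.
              ** assert (i = S a) by lia. subst i.
                 replace (S a + S b - (S a + 2)) with (b - 1) by lia. rewrite Hab.
                 intro E. apply (Hqn (b - 1)). lia. replace (b - 1 + 2) with (S b) by lia.
                 auto.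
           ++ lia.
           ++ replace (S a + S b - i) with ((S a + S b - (i + 2)) + 2) by lia.
              intro E. apply (Hqn (S a + S b - (i + 2))). lia. auto.
        -- lia.
        -- unfold c. destruct (le_lt_dec 0 (S a)); [|lia].
           destruct (le_lt_dec (S a + S b) (S a)); [lia|].
           replace (S a + S b - (S a + S b)) with 0 by lia. auto.
Qed.

Definition good (h : V -> V) := (forall u v, h u = h v -> u = v) /\ (forall u v, adj u v -> adj (h u) (h v)).
Lemma aut_good : forall h, is_aut adj h -> good h.
Proof. intros h [Hi [Hs Ha]]. split; auto. intros u v. apply Ha. Qed.
Lemma id_good : good (fun v => v).
Proof. split; auto. Qed.

Lemma shift_walk : forall r h a m, is_ray adj r -> good h ->
  is_walk adj (fun i => h (r (a + i))) m /\ NB (fun i => h (r (a + i))) m.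
Proof.
  intros r h a m Hr [Hi Ha]. split.
  - intros i _. replace (a + S i) with (S (a + i)) by lia. apply Ha. apply Hr.
  - intros i _ E. apply Hi in E. replace (a + (i + 2)) with (S (S (a + i))) in E by lia.
    apply (proj2 (Hr (a + i))). exact E.
Qed.

Lemma GL : forall r h1 h2 a b, is_ray adj r -> good h1 -> good h2 -> a <= b ->
  h1 (r a) = h2 (r a) -> h1 (r b) = h2 (r b) ->
  forall c, a <= c -> c <= b -> h1 (r c) = h2 (r c).
Proof.
  intros r h1 h2 a b Hr G1 G2 Hab Ea Eb c Hac Hcb.
  destruct (shift_walk r h1 a (b - a) Hr G1) as [W1 N1].
  destruct (shift_walk r h2 a (b - a) Hr G2) as [W2 N2].
  destruct (uniq_nb (b - a) (b - a) _ _ W1 N1 W2 N2) as [_ H].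
  - simpl. rewrite Nat.add_0_r. auto.
  - simpl. replace (a + (b - a)) with b by lia. auto.
  - specialize (H (c - a) ltac:(lia)). simpl in H. replace (a + (c - a)) with c in H by lia. auto.
Qed.

Lemma FixEnd : forall r h, is_ray adj r -> is_aut adj h -> h (r 0) = r 0 ->
  ray_equiv (fun n => h (r n)) r -> forall j, h (r j) = r j.
Proof.
  intros r h Hr Ha H0 [k [m Hkm]] j.
  destruct (shift_walk r h 0 k Hr (aut_good h Ha)) as [W1 N1].
  destruct (shift_walk r (fun v => v) 0 m Hr id_good) as [W2 N2].
  destruct (uniq_nb k m _ _ W1 N1 W2 N2) as [Ek H].
  - simpl. auto.
  - simpl. specialize (Hkm 0). simpl in Hkm. auto.
  - subst m. destruct (le_lt_dec j k).
    + specialize (H j l). simpl in H. auto.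
    + specialize (Hkm (j - k)). replace (j - k + k) with j in Hkm by lia. auto.
Qed.
End Tree.


Section Balls.
Variable V : Type.
Variable adj : V -> V -> Prop.
Hypothesis Htree : is_tree adj.
Hypothesis Hlf : locally_finite adj.
Variable v0 : V.

Definition Ball (n : nat) (w : V) : Prop :=
  exists c m, m <= n /\ c 0 = v0 /\ c m = w /\ is_walk adj c m.

Definition nbf (v : V) : list V := proj1_sig (constructive_indefinite_description _ (Hlf v)).
Lemma nbf_spec : forall v w, adj v w -> In w (nbf v).
Proof. intros v. unfold nbf. destruct (constructive_indefinite_description _ (Hlf v)). auto. Qed.

Definition decP (P : Prop) : bool := if excluded_middle_informative P then true else false.
Lemma decP_true : forall P, decP P = true <-> P.
Proof. intros P. unfold decP. destruct (excluded_middle_informative P); split; auto; discriminate. Qed.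

Lemma ball_super : forall n, exists L, forall w, Ball n w -> In w L.
Proof.
  induction n as [|n [L HL]].
  - exists [v0]. intros w [c [m [Hm [H0 [Hw _]]]]]. replace m with 0 in * by lia.
    left. congruence.
  - exists (L ++ flat_map nbf L). intros w [c [m [Hm [H0 [Hw Hwk]]]]].
    apply in_or_app. destruct (Nat.eq_dec m (S n)) as [->|Hne].
    + right. apply in_flat_map. exists (c n). split.
      * apply HL. exists c, n. repeat split; auto. intros i Hi. apply Hwk. lia.
      * apply nbf_spec. rewrite <- Hw. apply Hwk. lia.
    + left. apply HL. exists c, m. repeat split; auto. lia.
Qed.

Lemma ball_list : forall n, exists L, forall w, Ball n w <-> In w L.
Proof.
  intro n. destruct (ball_super n) as [L HL].
  exists (filter (fun w => decP (Ball n w)) L). intro w. rewrite filter_In, decP_true.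
  split; [intros H; split; auto | tauto].
Qed.

Definition BL (n : nat) : list V := proj1_sig (constructive_indefinite_description _ (ball_list n)).
Lemma BL_spec : forall n w, Ball n w <-> In w (BL n).
Proof. intros n. unfold BL. destruct (constructive_indefinite_description _ (ball_list n)). auto. Qed.

Lemma ball_mono : forall n m w, Ball n w -> n <= m -> Ball m w.
Proof. intros n m w [c [k [Hk H]]] Hnm. exists c, k. split; auto. lia. Qed.

Lemma ball_all : forall w, exists n, Ball n w.
Proof.
  intro w. destruct Htree as [_ [_ [Hc _]]]. destruct (Hc v0 w) as [c [n [H0 [Hn Hw]]]].
  exists n, c, n. auto.
Qed.

Lemma ball_list_all : forall F : list V, exists n, forall w, In w F -> Ball n w.
Proof.
  induction F as [|a F [n IH]].
  - exists 0. intros w [].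
  - destruct (ball_all a) as [m Hm]. exists (max n m). intros w [<-|Hw].
    + eapply ball_mono; eauto; lia.
    + eapply ball_mono; eauto; lia.
Qed.

Lemma ball_image : forall h n w, (forall u v, adj u v -> adj (h u) (h v)) -> h v0 = v0 ->
  Ball n w -> Ball n (h w).
Proof.
  intros h n w Ha H0 [c [m [Hm [Hc0 [Hcm Hw]]]]].
  exists (fun i => h (c i)), m. repeat split; auto.
  - rewrite Hc0. auto.
  - rewrite Hcm. auto.
  - intros i Hi. apply Ha. apply Hw. auto.
Qed.

Lemma ball_pull : forall h n w, is_aut adj h -> h v0 = v0 -> Ball n w ->
  exists u, Ball n u /\ h u = w.
Proof.
  intros h n w [Hi [Hs Ha]] H0 [c [m [Hm [Hc0 [Hcm Hw]]]]].
  set (hinv := fun x => proj1_sig (constructive_indefinite_description _ (Hs x))).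
  assert (Hh : forall x, h (hinv x) = x).
  { intro x. unfold hinv. destruct (constructive_indefinite_description _ (Hs x)). auto. }
  exists (hinv w). split; auto.
  exists (fun i => hinv (c i)), m. repeat split; auto.
  - apply Hi. rewrite Hh, Hc0. auto.
  - rewrite Hcm. auto.
  - intros i Hi'. apply Ha. rewrite !Hh. apply Hw. auto.
Qed.


Fixpoint tuples {X : Type} (L : list X) (m : nat) : list (list X) :=
  match m with
  | 0 => [[]]
  | S m => flat_map (fun x => map (cons x) (tuples L m)) L
  end.

Lemma tuples_in : forall {X : Type} (L : list X) s, (forall x, In x s -> In x L) -> In s (tuples L (length s)).
Proof.
  intros X L s. induction s as [|a s IH]; intros H; simpl.
  - auto.
  - apply in_flat_map. exists a. split; [apply H; left; auto|].
    apply in_map. apply IH. intros x Hx. apply H. right. auto.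
Qed.

Lemma map_eq_agree : forall (f h : V -> V) L, map f L = map h L -> agree_on L f h.
Proof.
  intros f h L. induction L as [|a L IH]; simpl; intros E v Hv; [destruct Hv|].
  injection E as E1 E2. destruct Hv as [<-|Hv]; auto. apply IH; auto.
Qed.

Definition Covered {I : Type} (U : I -> (V -> V) -> Prop) (S : (V -> V) -> Prop) :=
  exists l : list I, forall k, S k -> exists i, In i l /\ U i k.

Lemma cover_union : forall {I X : Type} (U : I -> (V -> V) -> Prop) (T : list X)
  (P : X -> (V -> V) -> Prop), (forall t, In t T -> Covered U (P t)) ->
  Covered U (fun k => exists t, In t T /\ P t k).
Proof.
  intros I X U T P. induction T as [|t T IH]; intros H.
  - exists []. intros k [t [[] _]].
  - destruct (H t (or_introl eq_refl)) as [l1 H1].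
    destruct IH as [l2 H2]. { intros t' Ht'. apply H. right. auto. }
    exists (l1 ++ l2). intros k [t' [[<-|Ht'] Hk]].
    + destruct (H1 k Hk) as [i [Hi Hu]]. exists i. split; auto. apply in_or_app. auto.
    + destruct (H2 k (ex_intro _ t' (conj Ht' Hk))) as [i [Hi Hu]]. exists i. split; auto.
      apply in_or_app. auto.
Qed.

Section Compact.
Variable K : (V -> V) -> Prop.
Hypothesis HKaut : subset K (is_aut adj).
Hypothesis HKfix : forall k, K k -> k v0 = v0.
Hypothesis HKcl : forall f, is_aut adj f -> (forall F, exists h, K h /\ agree_on F f h) -> K f.
Variable I : Type.
Variable U : I -> (V -> V) -> Prop.
Hypothesis HU : forall i, aut_open adj (U i).
Hypothesis Hcov : forall k, K k -> exists i, U i k.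
Hypothesis Hno : ~ Covered U K.

Definition Bad n k0 := ~ Covered U (fun k => K k /\ agree_on (BL n) k0 k).

Lemma bad_step : forall n k0, Bad n k0 -> exists k1, K k1 /\ agree_on (BL n) k0 k1 /\ Bad (S n) k1.
Proof.
  intros n k0 Hb. apply NNPP. intro Hn. apply Hb.
  set (L := BL (S n)).
  set (P := fun (t : list V) k => K k /\ agree_on (BL n) k0 k /\ map k L = t).
  assert (HC : Covered U (fun k => exists t, In t (tuples L (length L)) /\ P t k)).
  { apply cover_union. intros t _.
    destruct (classic (exists k1, P t k1)) as [[k1 [Hk1 [Ha1 Hm1]]]|Hnone].
    - assert (Hc : Covered U (fun k => K k /\ agree_on (BL (S n)) k1 k)).
      { apply NNPP. intro Hnc. apply Hn. exists k1. auto. }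
      destruct Hc as [l Hl]. exists l. intros k [Hk [Ha Hm]]. apply Hl. split; auto.
      apply map_eq_agree. fold L. congruence.
    - exists []. intros k Hk. exfalso. apply Hnone. eauto. }
  destruct HC as [l Hl]. exists l. intros k [Hk Ha]. apply Hl.
  exists (map k L). split.
  - replace (length L) with (length (map k L)) by apply length_map. apply tuples_in. intros x Hx.
    apply in_map_iff in Hx. destruct Hx as [y [<- Hy]]. unfold L in *.
    apply BL_spec. apply BL_spec in Hy. apply ball_image; auto.
    intros u v. apply (HKaut k Hk).
  - unfold P. auto.
Qed.


Definition stepf (n : nat) (k0 : V -> V) : V -> V :=
  match excluded_middle_informative (exists k1, K k1 /\ agree_on (BL n) k0 k1 /\ Bad (S n) k1) with
  | left H => proj1_sig (constructive_indefinite_description _ H)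
  | right _ => k0
  end.

Fixpoint ks (n : nat) : V -> V :=
  match n with 0 => fun v => v | S n => stepf n (ks n) end.

Lemma ks_bad : forall n, Bad n (ks n) /\ (forall m, n = S m -> K (ks n) /\ agree_on (BL m) (ks m) (ks n)).
Proof.
  induction n as [|n [IH _]].
  - split; [|intros; discriminate].
    intros [l Hl]. apply Hno. exists l. intros k Hk. apply Hl. split; auto.
    intros v Hv. apply BL_spec in Hv. destruct Hv as [c [m [Hm [H0 [Hw _]]]]].
    replace m with 0 in * by lia. subst v. rewrite H0. simpl. auto.
  - simpl. unfold stepf.
    destruct (excluded_middle_informative _) as [H|H].
    + destruct (constructive_indefinite_description _ H) as [k1 [Hk1 [Ha Hb]]]. simpl.
      split; auto. intros m Hm. injection Hm as ->. auto.
    + exfalso. apply H. apply bad_step. auto.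
Qed.

Lemma ks_K : forall n, K (ks (S n)).
Proof. intro n. apply (proj2 (ks_bad (S n)) n eq_refl). Qed.

Lemma ks_cons : forall n m v, Ball n v -> n <= m -> ks m v = ks n v.
Proof.
  intros n m v Hv Hnm. induction m as [|m IH].
  - replace n with 0 by lia. auto.
  - destruct (Nat.eq_dec n (S m)) as [->|Hne]; auto.
    rewrite <- IH by lia. destruct (proj2 (ks_bad (S m)) m eq_refl) as [_ Ha].
    apply Ha. apply BL_spec. eapply ball_mono; eauto. lia.
Qed.

Definition Nf (v : V) : nat := proj1_sig (constructive_indefinite_description _ (ball_all v)).
Lemma Nf_spec : forall v, Ball (Nf v) v.
Proof. intro v. unfold Nf. destruct (constructive_indefinite_description _ (ball_all v)). auto. Qed.

Definition flim (v : V) : V := ks (Nf v) v.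

Lemma flim_eq : forall v m, Ball m v -> flim v = ks m v.
Proof.
  intros v m Hm. unfold flim.
  rewrite <- (ks_cons (Nf v) (max m (Nf v)) v) by (auto using Nf_spec; lia).
  rewrite (ks_cons m (max m (Nf v)) v) by (auto; lia). auto.
Qed.

Lemma flim_aut : is_aut adj flim.
Proof.
  split; [|split].
  - intros u v E. destruct (ball_list_all [u; v]) as [m Hm].
    assert (Hu : Ball (S m) u) by (eapply ball_mono; [apply Hm; simpl; auto|lia]).
    assert (Hv : Ball (S m) v) by (eapply ball_mono; [apply Hm; simpl; auto|lia]).
    rewrite (flim_eq u _ Hu), (flim_eq v _ Hv) in E.
    apply (HKaut _ (ks_K m)) in E. auto.
  - intro w. destruct (ball_all w) as [n Hn].
    assert (Hn' : Ball (S n) w) by (eapply ball_mono; eauto).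
    destruct (ball_pull (ks (S n)) (S n) w (HKaut _ (ks_K n)) (HKfix _ (ks_K n)) Hn') as [u [Hu E]].
    exists u. rewrite (flim_eq u _ Hu). auto.
  - intros u v. destruct (ball_list_all [u; v]) as [m Hm].
    assert (Hu : Ball (S m) u) by (eapply ball_mono; [apply Hm; simpl; auto|lia]).
    assert (Hv : Ball (S m) v) by (eapply ball_mono; [apply Hm; simpl; auto|lia]).
    rewrite (flim_eq u _ Hu), (flim_eq v _ Hv). apply (HKaut _ (ks_K m)).
Qed.

Lemma flim_K : K flim.
Proof.
  apply HKcl. apply flim_aut. intro F. destruct (ball_list_all F) as [m Hm].
  exists (ks (S m)). split. apply ks_K. intros v Hv. symmetry. apply flim_eq.
  eapply ball_mono; eauto.
Qed.

Lemma compact_contra : False.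
Proof.
  destruct (Hcov _ flim_K) as [i Hi].
  destruct (HU i flim flim_aut Hi) as [F HF].
  destruct (ball_list_all F) as [M HM].
  apply (proj1 (ks_bad M)). exists [i]. intros k [Hk Ha]. exists i. split; [left; auto|].
  apply HF. apply HKaut; auto. intros v Hv.
  rewrite (flim_eq v M (HM v Hv)). apply Ha. apply BL_spec. auto.
Qed.

End Compact.

Lemma compact_C : forall K, subset K (is_aut adj) -> (forall k, K k -> k v0 = v0) ->
  (forall f, is_aut adj f -> (forall F, exists h, K h /\ agree_on F f h) -> K f) ->
  aut_compact adj K.
Proof.
  intros K H1 H2 H3. split; auto. intros I U HU Hcov.
  apply NNPP. intro Hno. apply (compact_contra K H1 H2 H3 I U HU Hcov Hno).
Qed.

End Balls.


Section Groups.
Variable V : Type.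
Variable adj : V -> V -> Prop.

Lemma reps : forall K, aut_compact adj K -> forall F : list V,
  exists A, (forall a, In a A -> K a) /\ forall k, K k -> exists a, In a A /\ agree_on F a k.
Proof.
  intros K [HKa HK] F.
  destruct (HK (V -> V) (fun a h => is_aut adj h /\ K a /\ agree_on F a h)) as [l Hl].
  - intros a f Hf [_ [Ha Hag]]. exists F. intros h Hh Hfh. split; [exact Hh|split; [exact Ha|]].
    intros v Hv. rewrite Hfh by auto. auto.
  - intros k Hk. exists k. split; [apply HKa; auto|split; auto]. intros v _. auto.
  - exists (filter (fun a => decP (K a)) l). split.
    + intros a Ha. apply filter_In in Ha. apply decP_true. tauto.
    + intros k Hk. destruct (Hl k Hk) as [a [Ha [_ [HKa' Hag]]]]. exists a. split; auto.
      apply filter_In. split; auto. apply decP_true; auto.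
Qed.

Lemma index_from_codes : forall K H (Sg : list (list V)) (W : list V),
  is_aut_subgroup adj K ->
  (forall k, K k -> In (map k W) Sg) ->
  (forall k, K k -> (forall w, In w W -> k w = w) -> H k) ->
  index_le K H (length Sg).
Proof.
  intros K H Sg W [_ [_ [Hcomp Hinv]]] Hc Hh.
  assert (Hs : exists s, length s <= length Sg /\ (forall a, In a s -> K a) /\
     forall sg, In sg Sg -> (exists k, K k /\ map k W = sg) -> exists a, In a s /\ map a W = sg).
  { clear Hc. induction Sg as [|sg Sg IH].
    - exists []. simpl. repeat split; auto. intros a []. intros sg [].
    - destruct IH as [s [Hl [HK Hx]]].
      destruct (classic (exists k, K k /\ map k W = sg)) as [[k [Hk Hm]]|Hn].
      + exists (k :: s). simpl. repeat split; try lia.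
        * intros a [<-|Ha]; auto.
        * intros sg' [<-|Hsg'] Hex; [exists k; split; [left; reflexivity|assumption]|].
          destruct (Hx sg' Hsg' Hex) as [a [Ha Hma]]. exists a. split; [right; assumption|assumption].
      + exists s. simpl. repeat split; auto; try lia.
        intros sg' [<-|Hsg'] Hex; [contradiction|]. auto. }
  destruct Hs as [s [Hl [HK Hx]]]. exists s. repeat split; auto.
  intros k Hk. destruct (Hx (map k W) (Hc k Hk) (ex_intro _ k (conj Hk eq_refl))) as [a [Ha Hma]].
  destruct (Hinv a (HK a Ha)) as [ai [Hai [Hai1 Hai2]]].
  exists a, (fun v => ai (k v)). repeat split; auto.
  - apply Hh. apply Hcomp; auto. intros w Hw.
    pose proof (map_eq_agree V a k W Hma w Hw) as E. simpl in E.
    rewrite E. auto.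
Qed.

Lemma length_flat_map_const : forall (X Y : Type) (f : X -> list Y) (l : list X) c,
  (forall x, In x l -> length (f x) = c) -> length (flat_map f l) = length l * c.
Proof.
  intros X Y f l c. induction l as [|x l IH]; intros H; simpl; auto.
  rewrite length_app, H by (left; auto). rewrite IH; auto. intros y Hy. apply H. right; auto.
Qed.

End Groups.

Section Main.
Variable V : Type.
Variable adj : V -> V -> Prop.
Variable G : (V -> V) -> Prop.
Variable g : V -> V.
Variable r : nat -> V.
Hypothesis Htree : is_tree adj.
Hypothesis Hlf : locally_finite adj.
Hypothesis HG : closed_subgroup adj G.
Hypothesis Hg : G g.
Hypothesis Hatt : attracting_ray adj g r.

Lemma HGaut : subset G (is_aut adj).
Proof. destruct HG as [[H1 [H2 [H3 H4]]] H5]; exact H1. Qed.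
Lemma HGid : G (fun v => v).
Proof. destruct HG as [[H1 [H2 [H3 H4]]] H5]; exact H2. Qed.
Lemma HGcomp : forall f h, G f -> G h -> G (fun v => f (h v)).
Proof. destruct HG as [[H1 [H2 [H3 H4]]] H5]; exact H3. Qed.
Lemma HGinv : forall f, G f -> exists h, G h /\ (forall v, f (h v) = v) /\ (forall v, h (f v) = v).
Proof. destruct HG as [[H1 [H2 [H3 H4]]] H5]; exact H4. Qed.
Lemma HGcl : forall f, is_aut adj f -> (forall F : list V, exists h, G h /\ agree_on F f h) -> G f.
Proof. destruct HG as [[H1 [H2 [H3 H4]]] H5]; exact H5. Qed.
Lemma Hr : is_ray adj r.
Proof. apply Hatt. Qed.

Definition ll : nat := proj1_sig (constructive_indefinite_description _ (proj2 Hatt)).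
Lemma ll_spec : 0 < ll /\ forall n, g (r n) = r (n + ll).
Proof. unfold ll. destruct (constructive_indefinite_description _ (proj2 Hatt)). auto. Qed.

Definition ginv : V -> V := proj1_sig (constructive_indefinite_description _ (HGinv g Hg)).
Lemma ginv_spec : G ginv /\ (forall v, g (ginv v) = v) /\ (forall v, ginv (g v) = v).
Proof. unfold ginv. destruct (constructive_indefinite_description _ (HGinv g Hg)). auto. Qed.

Definition gn (n : nat) (v : V) : V := Nat.iter n g v.
Definition gi (n : nat) (v : V) : V := Nat.iter n ginv v.

Lemma G_iter : forall f n, G f -> G (fun v => Nat.iter n f v).
Proof.
  intros f n Hf. induction n as [|n IH].
  - exact HGid.
  - exact (HGcomp f _ Hf IH).
Qed.
Lemma G_gn : forall n, G (gn n).
Proof. intro n. exact (G_iter g n Hg). Qed.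
Lemma G_gi : forall n, G (gi n).
Proof. intro n. exact (G_iter ginv n (proj1 ginv_spec)). Qed.

Lemma gn_gi : forall n v, gn n (gi n v) = v.
Proof.
  unfold gn, gi. induction n as [|n IH]; intro v; auto.
  rewrite (Nat.iter_succ_r n V ginv). simpl. rewrite IH. apply ginv_spec.
Qed.
Lemma gi_gn : forall n v, gi n (gn n v) = v.
Proof.
  unfold gn, gi. induction n as [|n IH]; intro v; auto.
  rewrite (Nat.iter_succ_r n V ginv). simpl. rewrite (proj2 (proj2 ginv_spec)). apply IH.
Qed.
Lemma gn_r : forall n m, gn n (r m) = r (m + n * ll).
Proof.
  unfold gn. induction n as [|n IH]; intro m; simpl.
  - rewrite Nat.add_0_r. auto.
  - rewrite IH, (proj2 ll_spec). f_equal. lia.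
Qed.

Lemma G_good : forall f, G f -> good V adj f.
Proof. intros f Hf. apply aut_good. apply HGaut. auto. Qed.


Lemma conj_G : forall n k, G k -> G (fun v => gi n (k (gn n v))).
Proof. intros n k Hk. apply HGcomp. apply G_gi. apply HGcomp; auto. apply G_gn. Qed.

Definition Kr : (V -> V) -> Prop := fun h => G h /\ forall m, h (r m) = r m.

Lemma Kr_sub : is_aut_subgroup adj Kr.
Proof.
  split; [|split; [|split]].
  - intros f [Hf _]. apply HGaut; auto.
  - split; [apply HGid|auto].
  - intros f h [Hf Ef] [Hh Eh]. split; [apply HGcomp; auto|]. intro m. rewrite Eh, Ef. auto.
  - intros f [Hf Ef]. destruct (HGinv f Hf) as [h [Hh [H1 H2]]]. exists h.
    split; [split; auto|auto]. intro m. rewrite <- (Ef m) at 1. auto.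
Qed.

Lemma Kr_compact : aut_compact adj Kr.
Proof.
  apply (compact_C V adj Htree Hlf (r 0)).
  - intros f [Hf _]. apply HGaut; auto.
  - intros k [_ Hk]. auto.
  - intros f Hf Happ. split.
    + apply HGcl; auto. intro F. destruct (Happ F) as [h [[Hh _] Ha]]. eauto.
    + intro m. destruct (Happ [r m]) as [h [[_ Hh] Ha]].
      rewrite <- (Ha (r m)) by (left; auto). auto.
Qed.

Lemma Kr_conj : forall n, subset Kr (conj_set g n Kr).
Proof.
  intros n k [Hk Ek]. exists (fun v => gi n (k (gn n v))). split.
  - split. apply conj_G; auto. intro m. rewrite gn_r, Ek, <- gn_r. apply gi_gn.
  - intro v. change (k (gn n v) = gn n (gi n (k (gn n v)))). rewrite gn_gi. auto.
Qed.

Lemma H1 : open_in G (stabilizer G r) ->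
  exists K, compact_open_subgroup adj G K /\ forall n, subset K (conj_set g n K).
Proof.
  intros [_ Hop]. exists Kr. split; [|apply Kr_conj].
  split; [split; [apply Kr_sub|intros f [Hf _]; auto]|split; [|apply Kr_compact]].
  split; [intros f [Hf _]; auto|].
  intros f [Hf Ef]. destruct (Hop f) as [F HF].
  { split; auto. exists 0, 0. intro n. apply Ef. }
  exists (r 0 :: F). intros h Hh Ha. split; auto.
  destruct (HF h Hh) as [_ Heq].
  { intros v Hv. apply Ha. right; auto. }
  apply (FixEnd V adj Htree r h Hr (HGaut h Hh)); auto.
  rewrite (Ha (r 0)) by (left; auto). auto.
Qed.

Lemma H2 : (exists K, compact_open_subgroup adj G K /\ forall n, subset K (conj_set g n K)) ->
  exists K, compact_open_subgroup adj G K /\ index_seq_bounded g K.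
Proof.
  intros [K [HK Hc]]. exists K. split; auto. exists 1. intro n.
  destruct HK as [[[_ [Hid _]] _] _].
  exists [fun v => v]. split; [simpl; lia|split].
  - intros a [<-|[]]. auto.
  - intros k Hk. exists (fun v => v), k. split; [left; auto|split].
    + split; auto. apply Hc; auto.
    + auto.
Qed.


Lemma Gx_id : stabilizer G r (fun v => v).
Proof. split. apply HGid. exists 0, 0. auto. Qed.

Lemma H4 : open_in G (stabilizer G r) ->
  forall K, compact_open_subgroup adj G K -> index_seq_bounded g K.
Proof.
  intros [_ Hop] K [[HKsub HKG] [[_ HKop] HKc]].
  pose proof HKsub as [HKaut [HKid [HKcomp HKinv]]].
  destruct (HKop (fun v => v) HKid) as [F0 HF0].
  destruct (Hop (fun v => v) Gx_id) as [F1 HF1].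
  destruct (reps V adj K HKc (r 0 :: F1)) as [A [HA1 HA2]].
  destruct (ball_list_all V adj Htree (r 0) F0) as [D HD].
  set (T := tuples (BL V adj Hlf (r 0) D) (length F0)).
  exists (length A * length T). intro n.
  set (Sg := flat_map (fun a => map (fun bs => map (fun b => a (gn n b)) bs) T) A).
  assert (HL : length Sg = length A * length T).
  { apply length_flat_map_const. intros a _. apply length_map. }
  rewrite <- HL. apply (index_from_codes V adj) with (W := map (gn n) F0); auto.
  - intros k Hk. destruct (HA2 k Hk) as [a [Ha Hag]].
    destruct (HKinv a (HA1 a Ha)) as [ai [Hai [Hai1 Hai2]]].
    set (s := fun v => ai (k v)).
    assert (Hs : G s) by (apply HKG; unfold s; apply HKcomp; auto).
    assert (Hsf : forall v, In v (r 0 :: F1) -> s v = v).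
    { intros v Hv. unfold s. rewrite (Hag v Hv). auto. }
    assert (Hsr : forall j, s (r j) = r j).
    { destruct (HF1 s Hs) as [_ Heq]. { intros v Hv. apply Hsf. right; auto. }
      apply (FixEnd V adj Htree r s Hr (HGaut s Hs)); auto. apply Hsf. left; auto. }
    apply in_flat_map. exists a. split; auto. apply in_map_iff.
    exists (map (fun w => gi n (s (gn n w))) F0). split.
    + rewrite !map_map. apply map_ext. intro w. rewrite gn_gi. unfold s. auto.
    + unfold T. replace (length F0) with (length (map (fun w => gi n (s (gn n w))) F0))
        by apply length_map.
      apply tuples_in. intros x Hx. apply in_map_iff in Hx. destruct Hx as [w [<- Hw]].
      apply BL_spec. apply (ball_image V adj (r 0) (fun v => gi n (s (gn n v)))); auto.
      * apply G_good. apply conj_G. auto.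
      * simpl. rewrite gn_r, Hsr, <- gn_r. apply gi_gn.
  - intros k Hk Hfix. split; auto.
    exists (fun v => gi n (k (gn n v))). split.
    + apply HF0. apply conj_G; auto. intros w Hw. rewrite Hfix. apply gi_gn.
      apply in_map. auto.
    + intro v. change (k (gn n v) = gn n (gi n (k (gn n v)))). rewrite gn_gi. auto.
Qed.


Lemma H3 : (exists K, compact_open_subgroup adj G K /\ index_seq_bounded g K) ->
  open_in G (stabilizer G r).
Proof.
  intros [K [[[HKsub HKG] [[_ HKop] HKc]] [B HB]]].
  pose proof HKsub as [HKaut [HKid [HKcomp HKinv]]].
  destruct (HKop (fun v => v) HKid) as [F0 HF0].
  destruct (reps V adj K HKc [r 0]) as [A [HA1 HA2]].
  set (Lorb := map (fun a => a (r 0)) A).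
  assert (Horb : forall k, K k -> In (k (r 0)) Lorb).
  { intros k Hk. destruct (HA2 k Hk) as [a [Ha Hag]]. rewrite (Hag (r 0)) by (left; auto).
    apply in_map_iff. eauto. }
  set (M := B * length Lorb).
  assert (Hsn : forall n, exists L, length L <= M /\ forall p, K p -> In (p (r (n * ll))) L).
  { intro n. destruct (HB n) as [s [Hls [HsK Hs]]].
    exists (flat_map (fun a => map (fun u => a (gn n u)) Lorb) s). split.
    - rewrite (length_flat_map_const _ _ _ _ (length Lorb)).
      + unfold M. apply Nat.mul_le_mono_r. auto.
      + intros a _. apply length_map.
    - intros p Hp. destruct (Hs p Hp) as [a [c [Ha [[_ [k [Hk Hck]]] Hpc]]]].
      apply in_flat_map. exists a. split; auto.
      replace (r (n * ll)) with (gn n (r 0)) by (rewrite gn_r; f_equal).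
      rewrite Hpc. change (c (gn n (r 0))) with (c (Nat.iter n g (r 0))). rewrite Hck.
      apply in_map_iff. exists (k (r 0)). split; [reflexivity|apply Horb; auto]. }
  set (Good := fun N => forall p, G p -> agree_on F0 (fun v => v) p -> p (r 0) = r 0 ->
     p (r (N * ll)) = r (N * ll) -> forall n', N < n' -> p (r (n' * ll)) = r (n' * ll)).
  pose proof (proj1 ll_spec) as Hll.
  destruct (classic (exists N, Good N)) as [[N HN]|Hno].
  - split; [intros f [Hf _]; auto|].
    intros f [Hf [k [m Hkm]]]. destruct (HGinv f Hf) as [fi [Hfi [Hf1 Hf2]]].
    exists (r 0 :: r (N * ll) :: F0). intros h Hh Ha.
    set (p := fun v => fi (h v)).
    assert (Hp : G p) by (unfold p; apply HGcomp; auto).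
    assert (Hpf : forall v, In v (r 0 :: r (N * ll) :: F0) -> p v = v).
    { intros v Hv. unfold p. rewrite (Ha v Hv). auto. }
    assert (Hpj : forall j, N * ll <= j -> p (r j) = r j).
    { intros j Hj.
      apply (GL V adj Htree r p (fun v => v) (N * ll) (j * ll) Hr (G_good p Hp) (id_good V adj));
        try nia.
      - apply Hpf. right; left; auto.
      - destruct (Nat.eq_dec j N) as [->|Hne].
        + apply Hpf. right; left; auto.
        + apply HN; auto; try nia.
          * intros v Hv. apply Hpf. right; right; auto.
          * apply Hpf. left; auto.
          * apply Hpf. right; left; auto. }
    split; auto. exists (k + N * ll), (m + N * ll). intro n0.
    rewrite <- (Hf1 (h (r (n0 + (k + N * ll))))). fold (p (r (n0 + (k + N * ll)))).
    rewrite Hpj by lia. replace (n0 + (k + N * ll)) with ((n0 + N * ll) + k) by lia.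
    rewrite Hkm. f_equal. lia.
  - exfalso.
    assert (Hbad : forall N, exists pq : (V -> V) * nat, G (fst pq) /\
      agree_on F0 (fun v => v) (fst pq) /\ fst pq (r 0) = r 0 /\
      fst pq (r (N * ll)) = r (N * ll) /\ N < snd pq /\ fst pq (r (snd pq * ll)) <> r (snd pq * ll)).
    { intro N. apply NNPP. intro Hn. apply Hno. exists N.
      intros p Hp H1 H2 H3 n' Hn'. apply NNPP. intro H4. apply Hn.
      exists (p, n'). simpl. auto 10. }
    set (bf := fun N => proj1_sig (constructive_indefinite_description _ (Hbad N))).
    assert (Hbf : forall N, G (fst (bf N)) /\
      agree_on F0 (fun v => v) (fst (bf N)) /\ fst (bf N) (r 0) = r 0 /\
      fst (bf N) (r (N * ll)) = r (N * ll) /\ N < snd (bf N) /\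
      fst (bf N) (r (snd (bf N) * ll)) <> r (snd (bf N) * ll)).
    { intro N. unfold bf. destruct (constructive_indefinite_description _ (Hbad N)). auto. }
    set (Ns := fun i => Nat.iter i (fun N => snd (bf N)) 0).
    assert (HNsS : forall i, Ns (S i) = snd (bf (Ns i))) by (intro i; reflexivity).
    set (q := fun i => fst (bf (Ns i))).
    assert (Hmono : forall i j, i <= j -> Ns i <= Ns j).
    { intros i j Hij. induction Hij; auto.
      rewrite HNsS. pose proof (proj1 (proj2 (proj2 (proj2 (proj2 (Hbf (Ns m))))))). lia. }
    assert (HqK : forall i, K (q i)).
    { intro i. apply HF0; apply (Hbf (Ns i)). }
    set (Tl := Ns (S M)).
    destruct (Hsn Tl) as [L [HLl HL]].
    set (fv := fun i => q i (r (Tl * ll))).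
    assert (Hdiff : forall i j, i < j -> j <= M -> fv i <> fv j).
    { intros i j Hij HjM E. unfold fv in E.
      destruct (Hbf (Ns i)) as [Gi [_ [Ri0 [_ [_ Hmv]]]]].
      destruct (Hbf (Ns j)) as [Gj [_ [Rj0 [Rjf _]]]].
      rewrite <- HNsS in Hmv. apply Hmv.
      assert (E2 : q i (r (Ns (S i) * ll)) = q j (r (Ns (S i) * ll))).
      { apply (GL V adj Htree r (q i) (q j) 0 (Tl * ll) Hr (G_good _ Gi) (G_good _ Gj)); auto.
        - lia.
        - unfold q. rewrite Ri0, Rj0. auto.
        - lia.
        - unfold Tl. apply Nat.mul_le_mono_r. apply Hmono. lia. }
      unfold q in E2. rewrite E2.
      apply (GL V adj Htree r (fst (bf (Ns j))) (fun v => v) 0 (Ns j * ll) Hr (G_good _ Gj)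
        (id_good V adj)); auto; try lia.
      apply Nat.mul_le_mono_r. apply Hmono. lia. }
    assert (HND : NoDup (map fv (seq 0 (S M)))).
    { apply NoDup_map_NoDup_ForallPairs; [|apply seq_NoDup].
      intros i j Hi Hj E. apply in_seq in Hi. apply in_seq in Hj.
      destruct (Nat.lt_total i j) as [H|[H|H]]; auto.
      - exfalso. apply (Hdiff i j); auto; lia.
      - exfalso. apply (Hdiff j i); auto; lia. }
    apply NoDup_incl_length with (l' := L) in HND.
    + rewrite length_map, length_seq in HND. lia.
    + intros x Hx. apply in_map_iff in Hx. destruct Hx as [i [<- _]]. apply HL. apply HqK.
Qed.

Definition K0 : (V -> V) -> Prop := fun h => G h /\ h (r 0) = r 0.

Lemma K0_cos : compact_open_subgroup adj G K0.
Proof.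
  split; [split|split].
  - split; [|split; [|split]].
    + intros f [Hf _]. apply HGaut; auto.
    + split; [apply HGid|auto].
    + intros f h [Hf Ef] [Hh Eh]. split; [apply HGcomp; auto|]. rewrite Eh, Ef. auto.
    + intros f [Hf Ef]. destruct (HGinv f Hf) as [h [Hh [H1 H2]]]. exists h.
      split; [split; auto|auto]. rewrite <- Ef at 1. auto.
  - intros f [Hf _]; auto.
  - split; [intros f [Hf _]; auto|]. intros f [Hf Ef]. exists [r 0].
    intros h Hh Ha. split; auto. rewrite (Ha (r 0)) by (left; auto). auto.
  - apply (compact_C V adj Htree Hlf (r 0)).
    + intros f [Hf _]. apply HGaut; auto.
    + intros k [_ Hk]. auto.
    + intros f Hf Happ. split.
      * apply HGcl; auto. intro F. destruct (Happ F) as [h [[Hh _] Ha]]. eauto.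
      * destruct (Happ [r 0]) as [h [[_ Hh] Ha]].
        rewrite <- (Ha (r 0)) by (left; auto). auto.
Qed.

End Main.

Theorem proposition3p2 (V : Type) (adj : V -> V -> Prop)
  (G : (V -> V) -> Prop) (g : V -> V) (r : nat -> V) :
  is_tree adj -> locally_finite adj -> closed_subgroup adj G ->
  G g -> hyperbolic adj g -> attracting_ray adj g r ->
  (open_in G (stabilizer G r) <->
     exists K, compact_open_subgroup adj G K /\
       forall n, subset K (conj_set g n K)) /\
  (open_in G (stabilizer G r) <->
     exists K, compact_open_subgroup adj G K /\ index_seq_bounded g K) /\
  (open_in G (stabilizer G r) <->
     forall K, compact_open_subgroup adj G K -> index_seq_bounded g K).
Proof.
  intros Ht Hl HG Hg _ Ha.
  pose proof (H1 V adj G g r Ht Hl HG Hg Ha) as P1.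
  pose proof (H2 V adj G g) as P2.
  pose proof (H3 V adj G g r Ht HG Ha) as P3.
  pose proof (H4 V adj G g r Ht Hl HG Hg Ha) as P4.
  pose proof (K0_cos V adj G r Ht Hl HG) as P5.
  split; [|split]; split.
  - exact P1.
  - intro H. apply P3. apply P2. exact H.
  - intro H. apply P2. apply P1. exact H.
  - exact P3.
  - exact P4.
  - intro H. apply P3. exists (K0 V G r). split. exact P5. apply H. exact P5.
Qed.
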